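(* Let $T$, $E$ (a $\mu$-spanning $\mathbb{T}$-eigenvector field), $R$, $(e_k)$, $\sigma_k$ be as in the context. For every positive integer $n$ the series $\sum_{k\ge1}\sigma_k^2\|T^ne_k\|^2$ converges and $$\sum_{k=1}^{\infty}\sigma_k^2\|T^ne_k\|^2\le\frac{\|E\|_2^2}{2}.$$
   Context: $\mathcal{H}$ complex separable infinite-dimensional Hilbert space (inner product linear in second variable), $T$ bounded, $\mathbb{T}$ unit circle, $\mu$ normalized Lebesgue measure. $E:\mathbb{T}\to\mathcal{H}$ bounded with $TE(\lambda)=\lambda E(\lambda)$, $\mu$-spanning ($\{E(\lambda):\lambda\in A\}$ spans a dense subspace whenever $\mu(A)=1$); $\|E\|_2^2=\int\|E(\lambda)\|^2d\mu$. $R$ is the positive trace-class operator with $\langle Rx,y\rangle=\int\langle x,E(\lambda)\rangle\overline{\langle y,E(\lambda)\rangle}d\mu(\lambda)$; $(e_k)_{k\ge1}$ is an orthonormal basis of eigenvectors of $R$, $Re_k=2\sigma_k^2e_k$. *)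

(* Defs.v *)
(* There is no Hilbert-space library, so a complex separable
   infinite-dimensional Hilbert space is axiomatised below as a left module
   over R[i] with an inner product (linear in the SECOND variable). *)
From HB Require Import structures.
From mathcomp Require Import all_boot all_order all_algebra.
From mathcomp Require Import all_classical all_reals all_analysis.
From mathcomp Require Import complex.
Set Implicit Arguments. Unset Strict Implicit. Unset Printing Implicit Defensive.
Import Order.TTheory GRing.Theory Num.Theory.
Import numFieldNormedType.Exports.
Local Open Scope ring_scope.
Local Open Scope classical_set_scope.

Section HilbertDefs.
Variable R : realType.
Local Notation C := R[i].

Definition cconj (z : C) : C := Complex (complex.Re z) (- complex.Im z).

Variable H : lmodType C.
Variable ip : H -> H -> C.

Definition hnorm (x : H) : R := Num.sqrt (complex.Re (ip x x)).

Definition in_closed_span (S : set H) (x : H) : Prop :=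
  forall eps : R, 0 < eps -> exists (n : nat) (a : 'I_n -> C) (v : 'I_n -> H),
    (forall j, S (v j)) /\ hnorm (x - \sum_(j < n) a j *: v j) < eps.

Definition dense_span (S : set H) : Prop := forall x, in_closed_span S x.

Record is_hilbert : Prop := {
  ip_linr : forall (x y z : H) (a : C), ip x (a *: y + z) = a * ip x y + ip x z;
  ip_herm : forall x y : H, ip y x = cconj (ip x y);
  ip_pos : forall x : H, complex.Im (ip x x) = 0 /\ 0 <= complex.Re (ip x x);
  ip_def : forall x : H, ip x x = 0 -> x = 0;
  h_complete : forall u : nat -> H,
    (forall eps : R, 0 < eps -> exists N : nat, forall m n : nat,
        (N <= m)%N -> (N <= n)%N -> hnorm (u m - u n) < eps) ->
    exists l : H, forall eps : R, 0 < eps -> exists N : nat, forall n : nat,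
        (N <= n)%N -> hnorm (u n - l) < eps;
  h_separable : exists d : nat -> H, forall (x : H) (eps : R), 0 < eps ->
    exists n : nat, hnorm (x - d n) < eps;
  h_infdim : forall n : nat, exists v : 'I_n -> H,
    forall j k : 'I_n, ip (v j) (v k) = (j == k)%:R
}.

Definition bounded_op (T : H -> H) : Prop :=
  exists M : R, forall x : H, hnorm (T x) <= M * hnorm x.

Definition orthonormal_basis (e : nat -> H) : Prop :=
  (forall j k : nat, ip (e j) (e k) = (j == k)%:R) /\ dense_span (range e).

End HilbertDefs.

(* The unit circle T is parametrised by t in [0,1) via t |-> exp(2 pi i t);
   the normalised Lebesgue measure mu on T is the image of Lebesgue measure
   on [0,1) under this map. *)
Definition circ (R : realType) (t : R) : R[i] :=
  Complex (cos (2 * pi * t)) (sin (2 * pi * t)).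

Definition I01 (R : realType) : set R := `[0%R, 1%R[%classic.
Arguments I01 R : clear implicits.

(* Main.v *)
Require Import Defs.
From HB Require Import structures.
From mathcomp Require Import all_boot all_order all_algebra.
From mathcomp Require Import all_classical all_reals all_analysis.
From mathcomp Require Import complex.
Import Order.TTheory GRing.Theory Num.Theory.
Import numFieldNormedType.Exports.
Local Open Scope ring_scope.
Local Open Scope classical_set_scope.

From mathcomp Require Import ring lra.
Set Implicit Arguments. Unset Strict Implicit. Unset Printing Implicit Defensive.

Section Basics.
Variable R : realType.
Local Notation C := R[i].

Definition sq (z : C) : R := complex.Re z ^+ 2 + complex.Im z ^+ 2.

Lemma cconjE (z : C) : cconj z = conjc z.
Proof. by case: z. Qed.

Lemma cRe_mul (a b : C) : complex.Re (a * b) = complex.Re a * complex.Re b - complex.Im a * complex.Im b.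
Proof. by case: a => a1 a2; case: b => b1 b2. Qed.
Lemma cIm_mul (a b : C) : complex.Im (a * b) = complex.Re a * complex.Im b + complex.Im a * complex.Re b.
Proof. by case: a => a1 a2; case: b => b1 b2. Qed.
Lemma cRe_conj (a : C) : complex.Re (conjc a) = complex.Re a.
Proof. by case: a. Qed.
Lemma cIm_conj (a : C) : complex.Im (conjc a) = - complex.Im a.
Proof. by case: a. Qed.
Lemma cRe_add (a b : C) : complex.Re (a + b) = complex.Re a + complex.Re b.
Proof. by case: a => a1 a2; case: b => b1 b2. Qed.
Lemma cIm_add (a b : C) : complex.Im (a + b) = complex.Im a + complex.Im b.
Proof. by case: a => a1 a2; case: b => b1 b2. Qed.
Lemma cRe_opp (a : C) : complex.Re (- a) = - complex.Re a.
Proof. by case: a. Qed.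
Lemma cIm_opp (a : C) : complex.Im (- a) = - complex.Im a.
Proof. by case: a. Qed.

Lemma sq_ge0 z : 0 <= sq z.
Proof. by rewrite /sq addr_ge0 // sqr_ge0. Qed.

Lemma sqM a b : sq (a * b) = sq a * sq b.
Proof. rewrite /sq cRe_mul cIm_mul; ring. Qed.

Lemma sq_conj a : sq (conjc a) = sq a.
Proof. by rewrite /sq cRe_conj cIm_conj sqrrN. Qed.

Lemma cRe_mulconj a : complex.Re (a * conjc a) = sq a.
Proof. rewrite cRe_mul cRe_conj cIm_conj /sq; ring. Qed.
End Basics.
Arguments sq {R}.

Section Hilb.
Variable R : realType.
Local Notation C := R[i].
Variable H : lmodType C.
Variable ip : H -> H -> C.
Hypothesis hH : is_hilbert ip.

Lemma ip0 x : ip x 0 = 0.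
Proof.
have := ip_linr hH x 0 0 1; rewrite scale1r addr0 mul1r.
by move=> /(congr1 (fun z => z - ip x 0)); rewrite subrr addrK.
Qed.

Lemma ipD x y z : ip x (y + z) = ip x y + ip x z.
Proof. by have := ip_linr hH x y z 1; rewrite scale1r mul1r. Qed.

Lemma ipZ x a y : ip x (a *: y) = a * ip x y.
Proof. by have := ip_linr hH x y 0 a; rewrite addr0 ip0 addr0. Qed.

Lemma ipN x y : ip x (- y) = - ip x y.
Proof. by rewrite -scaleN1r ipZ mulN1r. Qed.

Lemma ipB x y z : ip x (y - z) = ip x y - ip x z.
Proof. by rewrite ipD ipN. Qed.

Lemma ip_herm x y : ip y x = conjc (ip x y).
Proof. by rewrite (ip_herm hH) cconjE. Qed.

Lemma ipDl x y z : ip (x + y) z = ip x z + ip y z.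
Proof. by rewrite ip_herm ipD rmorphD /= -!ip_herm. Qed.

Lemma ipZl a x y : ip (a *: x) y = conjc a * ip x y.
Proof. by rewrite ip_herm ipZ rmorphM /= -ip_herm. Qed.

Lemma ip0l y : ip 0 y = 0.
Proof. by rewrite ip_herm ip0 rmorph0. Qed.

Lemma ipNl x y : ip (- x) y = - ip x y.
Proof. by rewrite ip_herm ipN rmorphN /= -ip_herm. Qed.

Lemma ipBl x y z : ip (x - y) z = ip x z - ip y z.
Proof. by rewrite ipDl ipNl. Qed.

Lemma ip_sumr K x (F : 'I_K -> H) : ip x (\sum_(i < K) F i) = \sum_(i < K) ip x (F i).
Proof.
elim: K F => [|K IH] F; first by rewrite !big_ord0 ip0.
by rewrite !big_ord_recr /= ipD IH.
Qed.

Lemma ip_suml K y (F : 'I_K -> H) : ip (\sum_(i < K) F i) y = \sum_(i < K) ip (F i) y.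
Proof.
elim: K F => [|K IH] F; first by rewrite !big_ord0 ip0l.
by rewrite !big_ord_recr /= ipDl IH.
Qed.

Definition nsq x : R := complex.Re (ip x x).

Lemma nsq_ge0 x : 0 <= nsq x.
Proof. exact: (ip_pos hH x).2. Qed.

Lemma hnorm_ge0 x : 0 <= hnorm ip x.
Proof. exact: sqrtr_ge0. Qed.

Lemma hnorm_sq x : hnorm ip x ^+ 2 = nsq x.
Proof. by rewrite /hnorm sqr_sqrtr // nsq_ge0. Qed.

Lemma Re_herm x y : complex.Re (ip y x) = complex.Re (ip x y).
Proof. by rewrite ip_herm cRe_conj. Qed.

Lemma nsqD x y : nsq (x + y) = nsq x + nsq y + 2 * complex.Re (ip x y).
Proof.
rewrite /nsq ipDl !ipD !cRe_add (Re_herm y x); ring.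
Qed.

Lemma nsqN x : nsq (- x) = nsq x.
Proof. by rewrite /nsq ipNl ipN opprK. Qed.

Lemma nsqB x y : nsq (x - y) = nsq x + nsq y - 2 * complex.Re (ip x y).
Proof. rewrite nsqD nsqN ipN cRe_opp; ring. Qed.

Lemma Im_ipxx x : complex.Im (ip x x) = 0.
Proof. exact: (ip_pos hH x).1. Qed.


Lemma nsqZ a x : nsq (a *: x) = sq a * nsq x.
Proof.
rewrite /nsq ipZl ipZ mulrA cRe_mul Im_ipxx mulr0 subr0.
by rewrite [conjc a * a]mulrC cRe_mulconj.
Qed.

Lemma nsq0 x : nsq x = 0 -> x = 0.
Proof.
move=> h; apply: (ip_def hH); move: h (Im_ipxx x); rewrite /nsq.
by case: (ip x x) => a b /= -> ->.
Qed.

Lemma nsqE0 : nsq 0 = 0.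
Proof. by rewrite /nsq ip0. Qed.

Lemma CS x y : complex.Re (ip x y) <= hnorm ip x * hnorm ip y.
Proof.
have [y0|yn0] := eqVneq (nsq y) 0.
  by rewrite (nsq0 y0) ip0 /= mulr_ge0 // hnorm_ge0.
set r := complex.Re (ip x y).
have ny : 0 < nsq y by rewrite lt_def yn0 nsq_ge0.
have key : r ^+ 2 <= nsq x * nsq y.
  pose t := r / nsq y.
  have := nsq_ge0 (x - Complex t 0 *: y).
  rewrite nsqB nsqZ ipZ cRe_mul /= mul0r subr0 -/r /sq /= expr0n /= addr0.
  move=> h.
  have e1 : t * nsq y = r by rewrite /t mulrVK ?unitfE.
  have e2 : t ^+ 2 * nsq y = t * r by rewrite expr2 -mulrA e1.
  rewrite e2 in h.
  have e3 : r ^+ 2 = t * r * nsq y by rewrite -e1 expr2; ring.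
  rewrite e3; nra.
have hx := hnorm_ge0 x; have hy := hnorm_ge0 y.
rewrite -!hnorm_sq in key.
have hp := mulr_ge0 hx hy.
rewrite leNgt; apply/negP => hlt.
have : (hnorm ip x * hnorm ip y) ^+ 2 < r ^+ 2 by nra.
rewrite exprMn; lra.
Qed.

Lemma CS_abs x y : `|complex.Re (ip x y)| <= hnorm ip x * hnorm ip y.
Proof.
rewrite ler_norml CS andbT.
have := CS (- x) y; rewrite ipNl cRe_opp /hnorm /nsq ipNl ipN opprK => h.
by rewrite lerNl.
Qed.

End Hilb.


Lemma cRe_sum (R : realType) K (F : 'I_K -> R[i]) :
  complex.Re (\sum_(k < K) F k) = \sum_(k < K) complex.Re (F k).
Proof.
elim: K F => [|K IH] F; first by rewrite !big_ord0.
by rewrite !big_ord_recr /= cRe_add IH.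
Qed.

Section Ortho.
Variable R : realType.
Local Notation C := R[i].
Variable H : lmodType C.
Variable ip : H -> H -> C.
Hypothesis hH : is_hilbert ip.
Variable e : nat -> H.
Hypothesis he : orthonormal_basis ip e.

Local Notation nsq := (nsq ip).

Lemma ee j k : ip (e j) (e k) = (j == k)%:R.
Proof. exact: he.1. Qed.

Definition P K x := \sum_(k < K) ip (e k) x *: e k.

Lemma ip_e_P j K x : ip (e j) (P K x) = if (j < K)%N then ip (e j) x else 0.
Proof.
rewrite /P (ip_sumr hH); under eq_bigr do rewrite (ipZ hH) ee.
elim: K => [|K IH]; first by rewrite big_ord0.
rewrite big_ord_recr /= IH ltnS.
case: (ltngtP j K) => h /=.
- by rewrite mulr0 addr0.
- by rewrite mulr0 addr0.
- by rewrite mulr1 add0r h.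
Qed.

Lemma ip_P_l K x y : ip (P K x) y = \sum_(k < K) conjc (ip (e k) x) * ip (e k) y.
Proof. by rewrite /P (ip_suml hH); under eq_bigr do rewrite (ipZl hH). Qed.

Lemma P0 K : P K 0 = 0.
Proof. by rewrite /P big1 // => k _; rewrite (ip0 hH) scale0r. Qed.

Lemma PD K x y : P K (x + y) = P K x + P K y.
Proof. by rewrite /P -big_split; apply: eq_bigr => k _; rewrite (ipD hH) scalerDl. Qed.

Lemma PZ K a x : P K (a *: x) = a *: P K x.
Proof. by rewrite /P scaler_sumr; apply: eq_bigr => k _; rewrite (ipZ hH) scalerA. Qed.

Lemma PN K x : P K (- x) = - P K x.
Proof. by rewrite -scaleN1r PZ scaleN1r. Qed.

Lemma PB K x y : P K (x - y) = P K x - P K y.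
Proof. by rewrite PD PN. Qed.

Lemma P_sumZ K n (a : 'I_n -> C) (v : 'I_n -> H) :
  P K (\sum_(j < n) a j *: v j) = \sum_(j < n) a j *: P K (v j).
Proof.
elim: n a v => [|n IH] a v; first by rewrite !big_ord0 P0.
by rewrite !big_ord_recr /= PD IH PZ.
Qed.

Lemma P_e i K : (i < K)%N -> P K (e i) = e i.
Proof.
move=> hi; rewrite /P (bigD1 (Ordinal hi)) //= ee eqxx scale1r big1 ?addr0 //.
move=> k hk; rewrite ee.
have -> : (nat_of_ord k == i) = false.
  by apply/negbTE; move: hk; apply: contra => /eqP h; apply/eqP/val_inj.
by rewrite scale0r.
Qed.

Lemma P_mono L K x : (L <= K)%N -> P L (P K x) = P L x.
Proof.
move=> LK; rewrite /P; apply: eq_bigr => k _.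
by rewrite ip_e_P (leq_trans (ltn_ord k) LK).
Qed.

Lemma P_id K x : P K (P K x) = P K x.
Proof. exact: P_mono. Qed.

Lemma nsq_P K x : nsq (P K x) = \sum_(k < K) sq (ip (e k) x).
Proof.
rewrite /nsq ip_P_l cRe_sum; apply: eq_bigr => k _.
by rewrite ip_e_P ltn_ord mulrC cRe_mulconj.
Qed.

Lemma ip_x_P K x : complex.Re (ip x (P K x)) = \sum_(k < K) sq (ip (e k) x).
Proof.
rewrite -(Re_herm hH) ip_P_l cRe_sum; apply: eq_bigr => k _.
by rewrite mulrC cRe_mulconj.
Qed.

Lemma bessel K x : nsq (x - P K x) = nsq x - \sum_(k < K) sq (ip (e k) x).
Proof. rewrite (nsqB hH) nsq_P ip_x_P; ring. Qed.

Lemma sum_sq_ge0 K x : 0 <= \sum_(k < K) sq (ip (e k) x).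
Proof. by apply: sumr_ge0 => k _; exact: sq_ge0. Qed.

Lemma bessel_le K x : \sum_(k < K) sq (ip (e k) x) <= nsq x.
Proof. by have := nsq_ge0 hH (x - P K x); rewrite bessel subr_ge0. Qed.

Lemma nsq_sub_le K x : nsq (x - P K x) <= nsq x.
Proof. by rewrite bessel gerBl sum_sq_ge0. Qed.

Lemma sum_sq_mono x L K : (L <= K)%N ->
  \sum_(k < L) sq (ip (e k) x) <= \sum_(k < K) sq (ip (e k) x).
Proof.
move=> LK; rewrite -!(big_mkord xpredT (fun k => sq (ip (e k) x))).
rewrite (big_cat_nat _ LK) //= lerDl.
by apply: sumr_ge0 => k _; exact: sq_ge0.
Qed.

Lemma parseval x eps : 0 < eps ->
  exists K, forall L, (K <= L)%N -> nsq (x - P L x) < eps.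
Proof.
move=> he0.
have hs : 0 < Num.sqrt eps by rewrite sqrtr_gt0.
have [n [a [v [Sv hv]]]] := he.2 x (Num.sqrt eps) hs.
have [idx hidx] : exists idx : 'I_n -> nat, forall j, e (idx j) = v j.
  apply: (@fin_all_exists _ (fun _ => nat) (fun j i => e i = v j)) => j.
  by have [i _ hi] := Sv j; exists i.
exists (\max_(j < n) idx j).+1 => L hL.
set y := \sum_(j < n) a j *: v j.
have Py : P L y = y.
  rewrite /y P_sumZ; apply: eq_bigr => j _; rewrite -hidx P_e //.
  by apply: leq_trans hL; rewrite ltnS (leq_bigmax j).
have -> : x - P L x = (x - y) - P L (x - y) by rewrite PB Py opprB addrA subrK.
apply: (le_lt_trans (nsq_sub_le _ _)).
rewrite -(hnorm_sq hH); rewrite -(sqr_sqrtr (ltW he0)).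
by rewrite ltr_pXn2r // nnegrE ?hnorm_ge0 ?sqrtr_ge0.
Qed.
End Ortho.


Lemma mono_cauchy (R : realType) (u : nat -> R) (Bd : R) :
  (forall m n, (m <= n)%N -> u m <= u n) -> (forall n, u n <= Bd) ->
  forall eps, 0 < eps -> exists N, forall K, (N <= K)%N -> u K < u N + eps.
Proof.
move=> mu ub eps he.
have hs : has_sup (range u).
  split; first by exists (u 0%N), 0%N.
  by exists Bd => _ [n _ <-].
have [_ [N _ <-] hN] := sup_adherent he hs.
exists N => K _.
have h : u K <= sup (range u) by apply: (sup_upper_bound hs); exists K.
lra.
Qed.

Lemma eps0 (R : realType) (r c : R) : 0 <= c ->
  (forall eps, 0 < eps -> `|r| <= eps * c) -> r = 0.
Proof.
move=> c0 h; apply/eqP; apply: contraT => rn0.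
have rp : 0 < `|r| by rewrite normr_gt0.
have c1 : 0 < c + 1 by lra.
have := h (`|r| / (c + 1)) (divr_gt0 rp c1).
rewrite mulrAC ler_pdivlMr // => h2.
have : `|r| * (c + 1) <= `|r| * c by [].
nra.
Qed.

Lemma cplx0 (R : realType) (z : R[i]) : complex.Re z = 0 -> complex.Im z = 0 -> z = 0.
Proof. by case: z => a b /= -> ->. Qed.

Section Adj.
Variable R : realType.
Local Notation C := R[i].
Variable H : lmodType C.
Variable ip : H -> H -> C.
Hypothesis hH : is_hilbert ip.
Variable e : nat -> H.
Hypothesis he : orthonormal_basis ip e.
Variable S : H -> H.
Hypothesis SD : forall x y, S (x + y) = S x + S y.
Hypothesis SZ : forall a x, S (a *: x) = a *: S x.
Variable B : R.
Hypothesis B0 : 0 <= B.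
Hypothesis SB : forall x, hnorm ip (S x) <= B * hnorm ip x.

Local Notation nsq := (nsq ip).
Local Notation P := (P ip e).
Local Notation hn := (hnorm ip).

Lemma S0 : S 0 = 0.
Proof. by have := SZ 0 0; rewrite !scale0r. Qed.

Lemma SB' x : S (- x) = - S x.
Proof. by rewrite -scaleN1r SZ scaleN1r. Qed.

Lemma S_sumZ K (b : 'I_K -> C) (v : 'I_K -> H) :
  S (\sum_(k < K) b k *: v k) = \sum_(k < K) b k *: S (v k).
Proof.
elim: K b v => [|K IH] b v; first by rewrite !big_ord0 S0.
by rewrite !big_ord_recr /= SD IH SZ.
Qed.

Lemma ip_e_comb j K (b : nat -> C) :
  ip (e j) (\sum_(k < K) b k *: e k) = if (j < K)%N then b j else 0.
Proof.
rewrite (ip_sumr hH); under eq_bigr do rewrite (ipZ hH) (ee he).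
elim: K => [|K IH]; first by rewrite big_ord0.
rewrite big_ord_recr /= IH ltnS.
case: (ltngtP j K) => h /=.
- by rewrite mulr0 addr0.
- by rewrite mulr0 addr0.
- by rewrite mulr1 add0r h.
Qed.

Lemma hn_lt z eps : 0 < eps -> nsq z < eps ^+ 2 -> hn z < eps.
Proof.
move=> he0 h; rewrite /hnorm -/(nsq z).
have := h; rewrite -ltr_sqrt ?exprn_gt0 // sqrtr_sqr gtr0_norm //.
Qed.

Lemma nsq_swap x y : nsq (x - y) = nsq (y - x).
Proof. by rewrite -(nsqN hH) opprB. Qed.

Lemma hn_swap x y : hn (x - y) = hn (y - x).
Proof. by rewrite /hnorm -!/(nsq _) nsq_swap. Qed.

Lemma adjoint y : exists v, forall x, ip v x = ip y (S x).
Proof.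
pose a k := ip y (S (e k)).
pose w K := \sum_(k < K) conjc (a k) *: e k.
have w1 j K : ip (e j) (w K) = if (j < K)%N then conjc (a j) else 0.
  exact: (ip_e_comb j K (fun k => conjc (a k))).
have w2 K : P K (w K) = w K.
  by rewrite /P; apply: eq_bigr => k _; rewrite w1 ltn_ord.
have w3 K x : ip (w K) x = ip y (S (P K x)).
  rewrite (ip_suml hH) /P S_sumZ (ip_sumr hH); apply: eq_bigr => k _.
  by rewrite (ipZl hH) (ipZ hH) conjcK mulrC.
have w5 L K : (L <= K)%N -> P L (w K) = w L.
  move=> LK; rewrite /P; apply: eq_bigr => k _.
  by rewrite w1 (leq_trans (ltn_ord k) LK).
pose s K := nsq (w K).
have sdiff L K : (L <= K)%N -> nsq (w K - w L) = s K - s L.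
  move=> LK; rewrite -(w5 _ _ LK) (bessel hH he) /s -(w5 _ _ LK) (nsq_P hH he).
  by [].
have smono m n : (m <= n)%N -> s m <= s n.
  by move=> mn; have := nsq_ge0 hH (w n - w m); rewrite sdiff // subr_ge0.
have hy := hnorm_ge0 ip y.
have sbound K : s K <= (hn y * B) ^+ 2.
  have e1 : s K = complex.Re (ip y (S (w K))) by rewrite /s /nsq w3 w2.
  have h1 : s K <= hn y * (B * hn (w K)).
    rewrite e1; apply: (le_trans (CS hH _ _)); exact: ler_wpM2l.
  have hw := hnorm_ge0 ip (w K).
  rewrite /s -(hnorm_sq hH) in h1 *.
  have h2 : hn (w K) <= hn y * B.
    rewrite leNgt; apply/negP => hlt.
    have : hn y * B * hn (w K) < hn (w K) * hn (w K).
      by rewrite ltr_pM2r // (le_lt_trans _ hlt) // mulr_ge0.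
    rewrite -expr2; lra.
  rewrite ler_pXn2r // ?nnegrE // mulr_ge0 //.
have [v hv] : exists v, forall eps, 0 < eps -> exists N, forall n, (N <= n)%N ->
    hn (w n - v) < eps.
  apply: (h_complete hH) => eps he0.
  have [N hN] := mono_cauchy smono sbound (exprn_gt0 2 he0).
  exists N => m n hm hn0.
  wlog mn : m n hm hn0 / (n <= m)%N.
    move=> W; case: (leqP n m) => h; first exact: W.
    by rewrite hn_swap; apply: W => //; exact: ltnW.
  apply: hn_lt => //; rewrite sdiff //.
  have := hN m hm; have := smono _ _ hn0; lra.
exists v => x.
pose d z := ip v z - ip y (S z).
have Red z : complex.Re (d z) = 0.
  apply: (@eps0 _ _ (hn z + hn y * B)).
    by rewrite addr_ge0 ?hnorm_ge0 // mulr_ge0.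
  move=> eps he0.
  have [K1 hK1] := hv eps he0.
  have [K2 hK2] := parseval hH he z (exprn_gt0 2 he0).
  pose K := maxn K1 K2.
  have dE : d z = ip (v - w K) z + ip y (S (P K z - z)).
    rewrite /d (ipBl hH) SD SB' (ipB hH) -w3; ring.
  rewrite dE cRe_add.
  apply: (le_trans (ler_normD _ _)).
  have t1 := CS_abs hH (v - w K) z.
  have t2 := CS_abs hH y (S (P K z - z)).
  have h1 : hn (v - w K) < eps by rewrite hn_swap hK1 // leq_maxl.
  have h2 : hn (P K z - z) < eps by rewrite hn_swap; apply: hn_lt => //; apply: hK2; rewrite leq_maxr.
  have h3 := SB (P K z - z).
  have g1 := hnorm_ge0 ip z; have g2 := hnorm_ge0 ip y.
  have u1 : hn (v - w K) * hn z <= eps * hn z by rewrite ler_wpM2r // ltW.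
  have u2 : hn y * hn (S (P K z - z)) <= hn y * (B * eps).
    by rewrite ler_wpM2l // (le_trans h3) // ler_wpM2l // ltW.
  lra.
have Imd : complex.Im (d x) = 0.
  have := Red (Complex 0 1 *: x).
  rewrite /d (ipZ hH) SZ (ipZ hH) -mulrBr cRe_mul /=.
  lra.
have := cplx0 (Red x) Imd; rewrite /d => /eqP; rewrite subr_eq0 => /eqP.
done.
Qed.

End Adj.


Section Rpart.
Variable R : realType.
Local Notation C := R[i].
Variable H : lmodType C.
Variable ip : H -> H -> C.
Hypothesis hH : is_hilbert ip.
Variable e : nat -> H.
Hypothesis he : orthonormal_basis ip e.
Variable E : R -> H.
Variable Rop : {linear H -> H}.
Hypothesis R_def : forall x y : H,
      complex.Re (ip (Rop x) y) =
        Rintegral lebesgue_measure (I01 R)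
           (fun t => complex.Re (ip x (E t) * cconj (ip y (E t)))).
Variable sigma : nat -> R.
Hypothesis he_eig : forall k, Rop (e k) = (Complex (2 * sigma k ^+ 2) 0) *: e k.

Local Notation nsq := (nsq ip).
Local Notation P := (P ip e).
Local Notation hn := (hnorm ip).
Definition cc k := 2 * sigma k ^+ 2.

Lemma cc_ge0 k : 0 <= cc k.
Proof. by rewrite /cc mulr_ge0 // sqr_ge0. Qed.

Definition Q x := complex.Re (ip (Rop x) x).

Lemma QE x : Q x = Rintegral lebesgue_measure (I01 R) (fun t => sq (ip x (E t))).
Proof.
rewrite /Q R_def; apply: eq_Rintegral => t _.
by rewrite cconjE cRe_mulconj.
Qed.

Lemma Q_ge0 x : 0 <= Q x.
Proof. by rewrite QE; apply: Rintegral_ge0 => t _; exact: sq_ge0. Qed.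

Lemma RsymRe x y : complex.Re (ip (Rop x) y) = complex.Re (ip (Rop y) x).
Proof.
rewrite !R_def; apply: eq_Rintegral => t _.
rewrite !cconjE !cRe_mul !cRe_conj !cIm_conj; ring.
Qed.

Lemma ip_Rop_P N v z : ip (Rop (P N v)) z =
  \sum_(k < N) Complex (cc k) 0 * conjc (ip (e k) v) * ip (e k) z.
Proof.
rewrite /P linear_sum (ip_suml hH); apply: eq_bigr => k _.
rewrite linearZ /= he_eig !(ipZl hH) mulrA [conjc _ * conjc _]mulrC.
by congr (_ * _ * _); rewrite /= oppr0.
Qed.

Lemma Q_lower v N : \sum_(k < N) cc k * sq (ip v (e k)) <= Q v.
Proof.
set p := P N v; set r := v - p.
have vE : v = p + r by rewrite /r addrC subrK.
have h0 : ip (Rop p) r = 0.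
  rewrite ip_Rop_P big1 // => k _.
  by rewrite /r (ipB hH) (ip_e_P hH he) ltn_ord subrr mulr0.
have QE2 : Q v = Q p + complex.Re (ip (Rop p) r) + complex.Re (ip (Rop r) p) + Q r.
  rewrite /Q {1 2}vE linearD /= (ipDl hH) !(ipD hH) !cRe_add.
  rewrite -/p -/r; ring.
rewrite QE2 (RsymRe r p) h0 /= addr0.
have -> : Q p = \sum_(k < N) cc k * sq (ip v (e k)).
  rewrite /Q ip_Rop_P cRe_sum; apply: eq_bigr => k _.
  rewrite (ip_e_P hH he) ltn_ord -mulrA cRe_mul /= mul0r subr0.
  by rewrite [conjc _ * _]mulrC cRe_mulconj -sq_conj -(ip_herm hH).
have := Q_ge0 r; rewrite ?addr0; lra.
Qed.

Lemma Q_e j : Q (e j) = cc j.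
Proof.
rewrite /Q he_eig (ipZl hH) (ee he) eqxx mulr1 /=.
done.
Qed.

Variable S : H -> H.
Hypothesis SD : forall x y, S (x + y) = S x + S y.
Hypothesis SZ : forall a x, S (a *: x) = a *: S x.
Variable B : R.
Hypothesis B0 : 0 <= B.
Hypothesis SB : forall x, hnorm ip (S x) <= B * hnorm ip x.
Variable lam : R -> C.
Hypothesis lam1 : forall t, I01 R t -> sq (lam t) = 1.
Hypothesis SE : forall t, I01 R t -> S (E t) = lam t *: E t.

Lemma key_j j N : \sum_(k < N) cc k * sq (ip (e j) (S (e k))) <= cc j.
Proof.
have [v hv] := adjoint hH he SD SZ B0 SB (e j).
have := Q_lower v N.
under eq_bigr do rewrite hv.
move/le_trans; apply.
rewrite QE -Q_e QE le_eqVlt; apply/orP; left; apply/eqP/eq_Rintegral => t.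
rewrite inE => ht.
by rewrite hv SE // (ipZ hH) sqM lam1 // mul1r.
Qed.

End Rpart.


Lemma bounded_of (R : realType) (A : set R) (f : R -> R) (K : R) :
  (forall t, A t -> `|f t| <= K) -> [bounded f t | t in A].
Proof.
move=> h; exists K; split; first exact: num_real.
by move=> y Ky t At; apply: le_trans (h t At) (ltW Ky).
Qed.

Lemma I01_meas (R : realType) : measurable (I01 R).
Proof. exact: measurable_itv. Qed.

Lemma I01_fin (R : realType) : (lebesgue_measure (I01 R) < +oo)%E.
Proof. by rewrite /I01 lebesgue_measure_itv /= lte01 /= ltry. Qed.

Section Ipart.
Variable R : realType.
Local Notation C := R[i].
Variable H : lmodType C.
Variable ip : H -> H -> C.
Hypothesis hH : is_hilbert ip.
Variable e : nat -> H.
Hypothesis he : orthonormal_basis ip e.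
Variable E : R -> H.
Hypothesis E_meas : forall x : H,
      measurable_fun (I01 R) (fun t => complex.Re (ip x (E t))) /\
      measurable_fun (I01 R) (fun t => complex.Im (ip x (E t))).
Variable Mb : R.
Hypothesis E_bdd : forall t, I01 R t -> hnorm ip (E t) <= Mb.

Local Notation nsq := (nsq ip).
Local Notation hn := (hnorm ip).

Definition gg j t := sq (ip (e j) (E t)).
Definition GG M t := \sum_(j < M) gg j t.

Lemma gg_meas j : measurable_fun (I01 R) (gg j).
Proof.
have [m1 m2] := E_meas (e j).
rewrite /gg /sq; apply: measurable_realfun.measurable_funD; exact: measurable_realfun.measurable_funX.
Qed.

Lemma GG_meas M : measurable_fun (I01 R) (GG M).
Proof. by rewrite /GG; apply: measurable_sum => j; exact: gg_meas. Qed.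

Lemma GG_le M t : GG M t <= nsq (E t).
Proof. exact: (bessel_le hH he M (E t)). Qed.

Lemma GG_ge0 M t : 0 <= GG M t.
Proof. exact: (sum_sq_ge0 ip e M (E t)). Qed.

Lemma nsqE_bdd t : I01 R t -> nsq (E t) <= Mb ^+ 2.
Proof.
move=> ht; rewrite -(hnorm_sq hH).
have h0 := hnorm_ge0 ip (E t); have h1 := E_bdd ht; nra.
Qed.

Lemma GG_cvg t : (fun M => GG M t) @ \oo --> nsq (E t).
Proof.
apply/cvgrPdist_lt => eps he0.
have [K hK] := parseval hH he (E t) he0.
exists K => // L /= hL.
have := hK L hL; rewrite (bessel hH he) => h.
rewrite /GG /gg ger0_norm //.
by rewrite subr_ge0 bessel_le.
Qed.

Lemma nsqE_meas : measurable_fun (I01 R) (fun t => nsq (E t)).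
Proof.
apply: (measurable_realfun.measurable_fun_cvg (h := GG)) => [m|t _]; first exact: GG_meas.
exact: GG_cvg.
Qed.

Lemma gg_int j : lebesgue_measure.-integrable (I01 R) (EFin \o gg j).
Proof.
apply: measurable_bounded_integrable; [exact: I01_meas|exact: I01_fin|exact: gg_meas|].
apply: (@bounded_of _ _ _ (Mb ^+ 2)) => t ht.
rewrite ger0_norm ?sq_ge0 // (le_trans _ (nsqE_bdd ht)) //.
have := GG_le j.+1 t; rewrite /GG big_ord_recr /= => h.
have := GG_ge0 j t; rewrite /GG; lra.
Qed.

Lemma GG_int M : lebesgue_measure.-integrable (I01 R) (EFin \o GG M).
Proof.
apply: measurable_bounded_integrable; [exact: I01_meas|exact: I01_fin|exact: GG_meas|].
apply: (@bounded_of _ _ _ (Mb ^+ 2)) => t ht.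
by rewrite ger0_norm ?GG_ge0 // (le_trans (GG_le _ _) (nsqE_bdd ht)).
Qed.

Lemma nsqE_int : lebesgue_measure.-integrable (I01 R) (EFin \o (fun t => nsq (E t))).
Proof.
apply: measurable_bounded_integrable; [exact: I01_meas|exact: I01_fin|exact: nsqE_meas|].
apply: (@bounded_of _ _ _ (Mb ^+ 2)) => t ht.
by rewrite ger0_norm ?nsq_ge0 // nsqE_bdd.
Qed.

Lemma sum_int M : \sum_(j < M) Rintegral lebesgue_measure (I01 R) (gg j) =
  Rintegral lebesgue_measure (I01 R) (GG M).
Proof.
elim: M => [|M IH].
  rewrite big_ord0 /GG.
  under eq_Rintegral do rewrite big_ord0.
  by rewrite Rintegral_cst ?mul0r //; exact: I01_meas.
rewrite big_ord_recr /= IH -RintegralD //; [|exact: I01_meas|exact: GG_int|exact: gg_int].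
by apply: eq_Rintegral => t _; rewrite /GG big_ord_recr.
Qed.

Lemma sum_int_le M : \sum_(j < M) Rintegral lebesgue_measure (I01 R) (gg j) <=
  Rintegral lebesgue_measure (I01 R) (fun t => hn (E t) ^+ 2).
Proof.
rewrite sum_int.
under [X in _ <= X]eq_Rintegral do rewrite (hnorm_sq hH).
apply: le_Rintegral; [exact: I01_meas|exact: GG_int|exact: nsqE_int|].
move=> t _; exact: GG_le.
Qed.

End Ipart.


Section Iter.
Variable R : realType.
Local Notation C := R[i].
Variable H : lmodType C.
Variable ip : H -> H -> C.
Variable T : {linear H -> H}.

Lemma iterD m x y : iter m T (x + y) = iter m T x + iter m T y.
Proof. by elim: m => //= m IH; rewrite IH linearD. Qed.

Lemma iterZ m a x : iter m T (a *: x) = a *: iter m T x.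
Proof. by elim: m => //= m IH; rewrite IH linearZ. Qed.

Lemma iterB M : (forall x, hnorm ip (T x) <= M * hnorm ip x) ->
  forall m x, hnorm ip (iter m T x) <= `|M| ^+ m * hnorm ip x.
Proof.
move=> hM; elim=> [|m IH] x /=; first by rewrite expr0 mul1r.
apply: (le_trans (hM _)).
apply: (le_trans (ler_wpM2r (hnorm_ge0 ip _) (ler_norm M))).
by rewrite exprS -mulrA ler_wpM2l // IH.
Qed.

Lemma iterE (v : H) (c : C) : T v = c *: v -> forall m, iter m T v = c ^+ m *: v.
Proof.
move=> hv; elim=> [|m IH] /=; first by rewrite expr0 scale1r.
by rewrite IH linearZ /= hv scalerA exprSr.
Qed.
End Iter.

Lemma sq_exp (R : realType) (z : R[i]) m : sq (z ^+ m) = sq z ^+ m.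
Proof.
elim: m => [|m IH]; first by rewrite !expr0 /sq /= expr1n expr0n addr0.
by rewrite !exprS sqM IH.
Qed.

Lemma sq_circ (R : realType) (t : R) : sq (circ t) = 1.
Proof. by rewrite /sq /circ /= cos2Dsin2. Qed.

Lemma ler_eps (R : realType) (x y c : R) : 0 <= c ->
  (forall eps, 0 < eps -> x <= y + eps * c) -> x <= y.
Proof.
move=> c0 h; rewrite leNgt; apply/negP => hxy.
have c1 : 0 < c + 1 by lra.
have ep : 0 < (x - y) / (c + 1) by rewrite divr_gt0 // subr_gt0.
have := h _ ep.
have : (x - y) / (c + 1) * c < x - y.
  rewrite mulrAC ltr_pdivrMr // ltr_pM2l ?subr_gt0 //; lra.
lra.
Qed.

Unset Implicit Arguments.
Theorem lemma5p11 (R : realType) (H : lmodType R[i]) (ip : H -> H -> R[i])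
  (hH : is_hilbert ip)
  (T : {linear H -> H}) (hT : bounded_op ip T)
  (E : R -> H)
  (E_meas : forall x : H,
      measurable_fun (I01 R) (fun t => complex.Re (ip x (E t))) /\
      measurable_fun (I01 R) (fun t => complex.Im (ip x (E t))))
  (E_bdd : exists M : R, forall t, I01 R t -> hnorm ip (E t) <= M)
  (E_eig : forall t, I01 R t -> T (E t) = circ t *: E t)
  (E_span : forall A : set R, measurable A -> A `<=` I01 R ->
      (lebesgue_measure A = 1%:E)%E ->
      dense_span ip [set E t | t in A])
  (Rop : {linear H -> H}) (hR : bounded_op ip Rop)
  (R_def : forall x y : H,
      complex.Re (ip (Rop x) y) =
        Rintegral lebesgue_measure (I01 R)
           (fun t => complex.Re (ip x (E t) * cconj (ip y (E t)))) /\
      complex.Im (ip (Rop x) y) =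
        Rintegral lebesgue_measure (I01 R)
           (fun t => complex.Im (ip x (E t) * cconj (ip y (E t)))))
  (e : nat -> H) (he : orthonormal_basis ip e) (sigma : nat -> R)
  (he_eig : forall k, Rop (e k) = (Complex (2 * sigma k ^+ 2) 0) *: e k)
  (n : nat) : (0 < n)%N ->
  let u := fun k : nat => sigma k ^+ 2 * hnorm ip (iter n T (e k)) ^+ 2 in
  cvgn (series u) /\
  limn (series u) <= Rintegral lebesgue_measure (I01 R) (fun t => hnorm ip (E t) ^+ 2) / 2.
Proof.
move=> n0 u.
have [M hM] := hT.
have [Mb hMb] := E_bdd.
set S := iter n T.
have SD : forall x y, S (x + y) = S x + S y by move=> x y; exact: iterD.
have SZ : forall a x, S (a *: x) = a *: S x by move=> a x; exact: iterZ.
have B0 : 0 <= `|M| ^+ n by rewrite exprn_ge0.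
have SB : forall x, hnorm ip (S x) <= `|M| ^+ n * hnorm ip x.
  by move=> x; exact: iterB.
pose lam := fun t : R => circ t ^+ n.
have lam1 t : I01 R t -> sq (lam t) = 1 by move=> _; rewrite sq_exp sq_circ expr1n.
have SE t : I01 R t -> S (E t) = lam t *: E t.
  by move=> ht; exact: (iterE (E_eig t ht)).
have R_def' := fun x y => (R_def x y).1.
set I := Rintegral lebesgue_measure (I01 R) (fun t => hnorm ip (E t) ^+ 2).
have bound N : \sum_(k < N) cc sigma k * nsq ip (S (e k)) <= I.
  apply: (@ler_eps _ _ _ (\sum_(k < N) cc sigma k)).
    by apply: sumr_ge0 => k _; exact: cc_ge0.
  move=> eps he0.
  have [K hK] : exists K : 'I_N -> nat, forall k L, (K k <= L)%N ->
      nsq ip (S (e k) - P ip e L (S (e k))) < eps.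
    apply: (@fin_all_exists 'I_N (fun _ => nat)
      (fun (k : 'I_N) (K : nat) => forall L, (K <= L)%N -> nsq ip (S (e k) - P ip e L (S (e k))) < eps)) => k.
    exact: (parseval hH he (S (e k)) he0).
  pose L := \max_(k < N) K k.
  have step (k : 'I_N) : nsq ip (S (e k)) <= eps + \sum_(j < L) sq (ip (e j) (S (e k))).
    have := hK k L (leq_bigmax k); rewrite (bessel hH he); lra.
  apply: le_trans (_ : \sum_(k < N) cc sigma k * (eps + \sum_(j < L) sq (ip (e j) (S (e k)))) <= _).
    by apply: ler_sum => k _; apply: ler_wpM2l; [exact: cc_ge0|exact: step].
  under eq_bigr do rewrite mulrDr mulr_sumr.
  rewrite big_split /= exchange_big /=.
  have -> : \sum_(k < N) cc sigma k * eps = eps * \sum_(k < N) cc sigma k.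
    by rewrite mulr_sumr; apply: eq_bigr => k _; rewrite mulrC.
  suff : \sum_(j < L) \sum_(k < N) cc sigma k * sq (ip (e j) (S (e k))) <= I by lra.
  apply: le_trans (_ : \sum_(j < L) cc sigma j <= I).
    by apply: ler_sum => j _; exact: (key_j hH he R_def' he_eig SD SZ B0 SB lam1 SE).
  apply: le_trans (sum_int_le hH he E_meas hMb L).
  apply: ler_sum => j _; rewrite -(Q_e hH he he_eig) (QE R_def').
  exact: le_refl.
have uE N : series u N = (\sum_(k < N) cc sigma k * nsq ip (S (e k))) / 2.
  rewrite /series /= big_mkord mulr_suml; apply: eq_bigr => k _.
  by rewrite /u -/S (hnorm_sq hH) /cc; field.
have ub N : series u N <= I / 2.
  by rewrite uE; have := bound N; lra.
have mono : {homo series u : a b / (a <= b)%N >-> a <= b}.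
  apply: nondecreasing_series => k _ _.
  by rewrite /u mulr_ge0 // sqr_ge0.
have cv : cvgn (series u).
  apply: nondecreasing_is_cvgn mono _.
  by exists (I / 2) => _ [N _ <-]; exact: ub.
split => //; apply: limr_le => //; apply: nearW => N; exact: ub.
Qed.
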